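(* If there exists a depth assignment $d:\Sigma^n\to\Sigma$ such that the valid subgraph of $B_n$ has a Hamiltonian cycle, then such a cycle $s_0,s_1,\dots,s_{N-1}$ (with $N=k^n$) corresponds to a de Bruijn sequence $s_0[0]s_1[0]\cdots s_{N-1}[0]$ of order $n$ whose discrepancy is at most $n+1$.
   Context: Let $k\ge 1$ be an integer, $\Sigma=\{0,1,\dots,k-1\}$ with arithmetic on symbols taken modulo $k$, and $n\ge 1$. For $s\in\Sigma^n$ write $s=s[0]\cdots s[n-1]$. The de Bruijn graph $B_n$ has node set $\Sigma^n$ and an arc $(s,t)$ iff $s[1]\cdots s[n-1]=t[0]\cdots t[n-2]$. A depth assignment is any function $d:\Sigma^n\to\Sigma$, written $s\mapsto d_s$. An arc $(s,t)$ of $B_n$ is valid (with respect to $d$) if, with $b=s[0]$ and $c=t[n-1]$, either ($b+1=c$ and $d_s=d_t$) or ($b+1=d_t$ and $c=d_s$); the valid arcs (on all of $\Sigma^n$) form the valid subgraph. A de Bruijn sequence of order $n$ is a circular string of length $k^n$ in which every string in $\Sigma^n$ occurs exactly once. The discrepancy of a string $w$ is the maximum over all substrings $s$ of $w$ (viewed circularly) of $\max_{a\in\Sigma}|s|_a-\min_{c\in\Sigma}|s|_c$, where $|s|_a$ is the number of occurrences of $a$ in $s$. *)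

(* Defs.v *)
From mathcomp Require Import all_boot.
Set Implicit Arguments. Unset Strict Implicit. Unset Printing Implicit Defensive.

Definition node (k n : nat) := (n.-tuple 'I_k)%type.

Definition vals k n (s : node k n) : seq nat := map val s.

Definition dB_arc k n (s t : node k n) : bool :=
  drop 1 (vals s) == take n.-1 (vals t).

Definition valid_arc k n (d : node k n -> 'I_k) (s t : node k n) : bool :=
  let b := head 0 (vals s) in
  let c := last 0 (vals t) in
  dB_arc s t &&
  ((((b + 1) %% k == c) && (d s == d t)) ||
   (((b + 1) %% k == val (d t)) && (c == val (d s)))).

Definition hamiltonian_cycle (T : finType) (e : rel T) (c : seq T) : Prop :=
  [/\ uniq c, (forall x : T, x \in c) & cycle e c].

Definition cwindow (w : seq nat) (i l : nat) : seq nat :=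
  [seq nth 0 w ((i + j) %% size w) | j <- iota 0 l].

Definition occurrences (w u : seq nat) : nat :=
  count (fun i => cwindow w i (size u) == u) (iota 0 (size w)).

Definition de_bruijn (k n : nat) (w : seq nat) : Prop :=
  [/\ size w = k ^ n, all (fun a => a < k) w &
      forall s : node k n, occurrences w (vals s) = 1].

Definition discrepancy (k : nat) (w : seq nat) : nat :=
  \max_(i < size w) \max_(l < (size w).+1) \max_(a < k) \max_(c < k)
     (count_mem (a : nat) (cwindow w i l) - count_mem (c : nat) (cwindow w i l)).

(* Main.v *)
Require Import Defs.
From mathcomp Require Import all_boot.
From mathcomp Require Import zify.
Set Implicit Arguments. Unset Strict Implicit. Unset Printing Implicit Defensive.

Definition Sy (a c x : nat) : bool :=
  if c < a then (c < x) && (x <= a) else (x <= a) || (c < x).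

Lemma sym_step k a c b : a < k -> c < k -> a != c -> b < k ->
  Sy a c ((b + 1) %% k) + (b == a) = Sy a c b + (b == c).
Proof.
move=> ak ck /eqP ac bk.
have E: (b + 1) %% k = if b + 1 < k then b + 1 else 0.
  case: ltnP => h; first by rewrite modn_small.
  have ->: b + 1 = k by lia. by rewrite modnn.
rewrite E /Sy; case: ifP => h1; case: ifP => h2; lia.
Qed.

Lemma count_shift n (S : pred nat) (vs vt : seq nat) : size vt = n -> 0 < n ->
  drop 1 vs = take n.-1 vt -> count S vt = count S (drop 1 vs) + S (last 0 vt).
Proof.
move=> sz n0 ->; case/lastP: vt sz => [|p x]; first by move=> /= E; lia.
rewrite size_rcons => sz; rewrite -sz /= -cats1 take_size_cat // count_cat last_cat /=.
lia.
Qed.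

Lemma count_head (S : pred nat) vs : 0 < size vs ->
  count S vs = S (head 0 vs) + count S (drop 1 vs).
Proof. by case: vs => //= x l _; rewrite drop0. Qed.

Definition cnt k n (d : node k n -> 'I_k) (S : pred nat) (s : node k n) :=
  count S (vals s) + S (val (d s)).

Lemma size_vals k n (s : node k n) : size (vals s) = n.
Proof. by rewrite /vals size_map size_tuple. Qed.

Lemma step_valid k n (d : node k n -> 'I_k) S (s t : node k n) : 0 < n ->
  valid_arc d s t ->
  cnt d S t + S (head 0 (vals s)) = cnt d S s + S ((head 0 (vals s) + 1) %% k).
Proof.
move=> n0 /andP [/eqP Harc Hc].
have Ht := count_shift S (size_vals t) n0 Harc.
have Hs : count S (vals s) = S (head 0 (vals s)) + count S (drop 1 (vals s)).
  by apply: count_head; rewrite size_vals.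
rewrite /cnt Ht Hs.
case/orP: Hc => /andP [/eqP E1 /eqP E2].
  by rewrite -E1 E2; lia.
by rewrite E2 -E1; lia.
Qed.

Lemma arc_nth k n (s t : node k n) : dB_arc s t ->
  forall m, m.+1 < n -> nth 0 (vals t) m = nth 0 (vals s) m.+1.
Proof.
move/eqP => H m Hm.
have : nth 0 (drop 1 (vals s)) m = nth 0 (take n.-1 (vals t)) m by rewrite H.
rewrite nth_drop nth_take; last by lia.
by rewrite add1n => ->.
Qed.

Lemma cycle_succ (T : eqType) (e : rel T) (x0 : T) (c : seq T) :
  cycle e c -> forall m, m < size c -> e (nth x0 c m) (nth x0 c (m.+1 %% size c)).
Proof.
rewrite (cycle_path x0) => /(pathP x0) H m Hm.
case: (ltnP m.+1 (size c)) => h.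
  by rewrite modn_small //; apply: (H m.+1).
have E : m.+1 = size c by lia.
rewrite E modnn.
have := H 0 (leq_ltn_trans (leq0n m) Hm); rewrite /= (last_nth x0).
case: c Hm E {H h} => //= y l _ [<-] /=. done.
Qed.

Theorem theorem2 (k n : nat) (hk : 1 <= k) (hn : 1 <= n)
  (d : node k n -> 'I_k) (c : seq (node k n)) :
  hamiltonian_cycle (valid_arc d) c ->
  let w := [seq head 0 (vals s) | s <- c] in
  de_bruijn k n w /\ discrepancy k w <= n + 1.
Proof.
move=> [Hu Hall Hcyc] w.
pose x0 : node k n := nseq_tuple n (Ordinal hk).
set N := size c.
have N0 : 0 < N by move: (Hall x0); rewrite /N; case: (c).
have succ : forall m, valid_arc d (nth x0 c (m %% N)) (nth x0 c (m.+1 %% N)).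
  move=> m; have := cycle_succ x0 Hcyc (ltn_pmod m N0).
  by rewrite -/N -addn1 modnDml addn1.
have szw : size w = N by rewrite size_map.
have nthw : forall j, nth 0 w (j %% N) = head 0 (vals (nth x0 c (j %% N))).
  by move=> j; rewrite (nth_map x0) // ltn_pmod.
split; last first.
  rewrite /discrepancy.
  apply/bigmax_leqP => i0 _; move: (nat_of_ord i0) => {i0} i; apply/bigmax_leqP => l _ /=.
  apply/bigmax_leqP => a _; apply/bigmax_leqP => b _.
  case: (eqVneq (a : nat) (b : nat)) => [->|ab]; first by rewrite subnn.
  set S := Sy a b.
  have tel : forall l, cnt d S (nth x0 c ((i + l) %% N)) + count_mem (a : nat) (cwindow w i l)
      = cnt d S (nth x0 c (i %% N)) + count_mem (b : nat) (cwindow w i l).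
    elim=> [|l0 IH]; first by rewrite addn0 /cwindow /=.
    have cw : cwindow w i l0.+1 = cwindow w i l0 ++ [:: nth 0 w ((i + l0) %% size w)].
      by rewrite /cwindow -addn1 iotaD map_cat add0n.
    rewrite cw !count_cat szw nthw /= addnS.
    have st := step_valid S hn (succ (i + l0)).
    set u := head 0 (vals (nth x0 c ((i + l0) %% N))) in st *.
    have hlt : u < k.
      by rewrite /u; case: (nth x0 c _) => [[|y ll] /=]; rewrite /vals //= => _; apply: ltn_ord.
    have sy := sym_step (ltn_ord a) (ltn_ord b) ab hlt.
    rewrite -/S in sy. move: IH st sy. rewrite /= !addn0; move: (S ((u + 1) %% k)) => q; move: (S u) => p; move: (u == a) => ea; move: (u == b) => eb; lia.
  have := tel l.
  have : cnt d S (nth x0 c (i %% N)) <= n + 1.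
    rewrite /cnt leq_add //; first by apply: leq_trans (count_size _ _) _; rewrite size_vals.
    by case: (S _).
  move: (cnt d S _) (cnt d S _) (count_mem _ _) (count_mem _ _) => x1 x2 x3 x4.
  lia.
have win : forall i, i < N -> cwindow w i n = vals (nth x0 c i).
  move=> i iN.
  have gen : forall j m, j + m < n ->
      nth 0 (vals (nth x0 c ((i + j) %% N))) m = nth 0 (vals (nth x0 c i)) (j + m).
    elim=> [|j IH] m jm; first by rewrite addn0 modn_small.
    have := succ (i + j); rewrite -addnS => /andP [Harc _].
    rewrite (arc_nth Harc); last by lia.
    by rewrite IH ?addSnnS //; lia.
  apply: (@eq_from_nth _ 0); first by rewrite size_map size_iota size_vals.
  rewrite size_map size_iota => j jn.
  rewrite (nth_map 0) ?size_iota // nth_iota // add0n szw nthw.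
  have := gen j 0; rewrite addn0 => <- //.
split.
- rewrite szw /N -(card_uniqP Hu) -[k in k ^ n]card_ord -card_tuple.
  by apply: eq_card => x; rewrite Hall.
- rewrite all_map; apply/allP => s _ /=.
  by case: s => [[|y l] /=]; rewrite /vals //= => _; apply: ltn_ord.
move=> s; rewrite /occurrences size_vals szw.
rewrite (@eq_in_count _ _ (fun i => nth x0 c i == s)); last first.
  move=> i; rewrite mem_iota add0n => /andP [_ iN] /=.
  rewrite win //; apply/inj_eq => x y /= H.
  by apply: val_inj; apply: (inj_map val_inj).
rewrite -(count_map (nth x0 c) (pred1 s)) -/(mkseq _ _) mkseq_nth.
by rewrite count_uniq_mem // Hall.
Qed.
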